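(* Let $\mathbb{K}$ be an algebraically closed field of characteristic $0$ and $\alpha,\alpha'\in\mathbb{K}$. The down-up algebras $A(\alpha,0,0)$ and $A(\alpha',0,0)$ are isomorphic as $\mathbb{K}$-algebras if and only if $\alpha=\alpha'$.
   Context: For $(\alpha,\beta,\gamma)\in\mathbb{K}^3$, the down-up algebra $A(\alpha,\beta,\gamma)$ is the quotient of the free associative algebra $\mathbb{K}\langle d,u\rangle$ by the two-sided ideal generated by $d^2u-(\alpha dud+\beta ud^2+\gamma d)$ and $du^2-(\alpha udu+\beta u^2d+\gamma u)$. *)

(* Defs.v *)
From HB Require Import structures.
From mathcomp Require Import all_boot all_order all_algebra.
Set Implicit Arguments. Unset Strict Implicit. Unset Printing Implicit Defensive.
Import GRing.Theory.
Local Open Scope ring_scope.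

(* Terms of the free unital associative K-algebra on two generators d, u:
   generators, scalars (constants), sums and products. *)
Inductive term (K : Type) : Type :=
  | Gd : term K
  | Gu : term K
  | Cst : K -> term K
  | Add : term K -> term K -> term K
  | Mul : term K -> term K -> term K.
Arguments Gd {K}. Arguments Gu {K}.

(* [dueq a b c] is the congruence on terms whose quotient is the down-up
   algebra A(a,b,c) = K<d,u> / (d^2u - (a dud + b ud^2 + c d),
                                du^2 - (a udu + b u^2d + c u)). *)
Inductive dueq (K : fieldType) (a b c : K) : term K -> term K -> Prop :=
  | dq_refl t : dueq a b c t t
  | dq_sym s t : dueq a b c s t -> dueq a b c t s
  | dq_trans s t v : dueq a b c s t -> dueq a b c t v -> dueq a b c s v
  | dq_add s s' t t' : dueq a b c s s' -> dueq a b c t t' ->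
      dueq a b c (Add s t) (Add s' t')
  | dq_mul s s' t t' : dueq a b c s s' -> dueq a b c t t' ->
      dueq a b c (Mul s t) (Mul s' t')
  | dq_addA s t v : dueq a b c (Add s (Add t v)) (Add (Add s t) v)
  | dq_addC s t : dueq a b c (Add s t) (Add t s)
  | dq_add0 t : dueq a b c (Add (Cst 0) t) t
  | dq_mulA s t v : dueq a b c (Mul s (Mul t v)) (Mul (Mul s t) v)
  | dq_mul1l t : dueq a b c (Mul (Cst 1) t) t
  | dq_mul1r t : dueq a b c (Mul t (Cst 1)) t
  | dq_mul0l t : dueq a b c (Mul (Cst 0) t) (Cst 0)
  | dq_mulDl s t v : dueq a b c (Mul (Add s t) v) (Add (Mul s v) (Mul t v))
  | dq_mulDr s t v : dueq a b c (Mul s (Add t v)) (Add (Mul s t) (Mul s v))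
  | dq_cstD k l : dueq a b c (Add (Cst k) (Cst l)) (Cst (k + l))
  | dq_cstM k l : dueq a b c (Mul (Cst k) (Cst l)) (Cst (k * l))
  | dq_cstC k t : dueq a b c (Mul (Cst k) t) (Mul t (Cst k))
  | dq_rel1 : dueq a b c (Mul (Mul Gd Gd) Gu)
      (Add (Add (Mul (Cst a) (Mul (Mul Gd Gu) Gd))
                (Mul (Cst b) (Mul (Mul Gu Gd) Gd)))
           (Mul (Cst c) Gd))
  | dq_rel2 : dueq a b c (Mul (Mul Gd Gu) Gu)
      (Add (Add (Mul (Cst a) (Mul (Mul Gu Gd) Gu))
                (Mul (Cst b) (Mul (Mul Gu Gu) Gd)))
           (Mul (Cst c) Gu)).

Fixpoint subst (K : Type) (pd pu : term K) (t : term K) : term K :=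
  match t with
  | Gd => pd
  | Gu => pu
  | Cst k => Cst k
  | Add s v => Add (subst pd pu s) (subst pd pu v)
  | Mul s v => Mul (subst pd pu s) (subst pd pu v)
  end.

(* A(a,b,c) and A(a',b',c') are isomorphic as K-algebras: there are K-algebra
   morphisms f : A(a,b,c) -> A(a',b',c') and g : A(a',b',c') -> A(a,b,c)
   (every such morphism is induced by an endomorphism [subst] of K<d,u>
   compatible with the two congruences) which are mutually inverse. *)
Definition downup_isomorphic (K : fieldType) (a b c a' b' c' : K) : Prop :=
  exists pd pu qd qu : term K,
    [/\ (forall s t, dueq a b c s t ->
            dueq a' b' c' (subst pd pu s) (subst pd pu t)),
        (forall s t, dueq a' b' c' s t ->
            dueq a b c (subst qd qu s) (subst qd qu t)),
        (forall t, dueq a b c (subst qd qu (subst pd pu t)) t) &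
        (forall t, dueq a' b' c' (subst pd pu (subst qd qu t)) t)].

(* Main.v *)
Require Import Defs.
From HB Require Import structures.
From mathcomp Require Import all_boot all_order all_algebra.
From mathcomp Require Import ring.
Set Implicit Arguments. Unset Strict Implicit. Unset Printing Implicit Defensive.
Import GRing.Theory.
Local Open Scope ring_scope.

Section Gen.
Variable K : fieldType.

Fixpoint ev (R : nzRingType) (c : K -> R) (D U : R) (t : term K) : R :=
  match t with
  | Gd => D | Gu => U | Cst k => c k
  | Add s v => ev c D U s + ev c D U v
  | Mul s v => ev c D U s * ev c D U v
  end.

Lemma ev_subst (R : nzRingType) (c : K -> R) D U pd pu t :
  ev c D U (subst pd pu t) = ev c (ev c D U pd) (ev c D U pu) t.
Proof. by elim: t => //= s -> v ->. Qed.

Definition ok_c (R : nzRingType) (c : K -> R) :=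
  [/\ forall k l, c (k + l) = c k + c l, forall k l, c (k * l) = c k * c l,
      c 0 = 0, c 1 = 1 & forall k x, c k * x = x * c k].

Definition model (R : nzRingType) (c : K -> R) (a : K) (D U : R) :=
  D * D * U = c a * (D * U * D) + c 0 * (U * D * D) + c 0 * D /\
  D * U * U = c a * (U * D * U) + c 0 * (U * U * D) + c 0 * U.

Lemma sound (R : nzRingType) (c : K -> R) a D U : ok_c c -> model c a D U ->
  forall s t, dueq a 0 0 s t -> ev c D U s = ev c D U t.
Proof.
move=> [cD cM c0 c1 cC] [m1 m2] s t; elim=> /=; intros; try congruence.
all: try first [ by rewrite addrA | by rewrite addrC | by rewrite c0 add0r
  | by rewrite mulrA | by rewrite c1 mul1r | by rewrite c1 mulr1
  | by rewrite c0 mul0r | by rewrite mulrDl | by rewrite mulrDr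
  | by rewrite cD | by rewrite cM | by rewrite cC ].
all: by [].
Qed.

Lemma ev_nat (R S : nzRingType) (cR : K -> R) (cS : K -> S) (f : R -> S) D U t :
  (forall x y, f (x + y) = f x + f y) -> (forall x y, f (x * y) = f x * f y) ->
  (forall k, f (cR k) = cS k) ->
  ev cS (f D) (f U) t = f (ev cR D U t).
Proof. move=> fD fM fC; elim: t => //= [s IHs v IHv|s IHs v IHv]; by rewrite ?fD ?fM IHs IHv. Qed.

Lemma model_push a a' pd pu (R : nzRingType) (c : K -> R) D U :
  (forall s t, dueq a 0 0 s t -> dueq a' 0 0 (subst pd pu s) (subst pd pu t)) ->
  ok_c c -> model c a' D U -> model c a (ev c D U pd) (ev c D U pu).
Proof.
move=> H oc m.
have h1 := sound oc m (H _ _ (dq_rel1 a 0 0)).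
have h2 := sound oc m (H _ _ (dq_rel2 a 0 0)).
rewrite !ev_subst /= in h1 h2; by split.
Qed.

Lemma comp_back a pd pu qd qu (R : nzRingType) (c : K -> R) D U :
  (forall t, dueq a 0 0 (subst qd qu (subst pd pu t)) t) ->
  ok_c c -> model c a D U ->
  ev c (ev c D U qd) (ev c D U qu) pd = D /\
  ev c (ev c D U qd) (ev c D U qu) pu = U.
Proof.
move=> H oc m; split.
- by have := sound oc m (H Gd); rewrite /= ev_subst.
- by have := sound oc m (H Gu); rewrite /= ev_subst.
Qed.

Lemma okK : ok_c (fun k : K => k).
Proof. split=> // *; exact: mulrC. Qed.

Lemma okP : ok_c (fun k : K => k%:P).
Proof. split=> *; [exact: polyCD|exact: polyCM|exact: polyC0|by []|exact: mulrC]. Qed.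

Lemma okM : ok_c (fun k : K => (k%:M : 'M[K]_2)).
Proof.
split=> *; [exact: raddfD|exact: scalar_mxM|exact: raddf0|by []|].
by rewrite -!mulmxE scalar_mxC.
Qed.

End Gen.

Section UT.
Variable K : fieldType.

Definition ut (a x b : K) : 'M[K]_2 :=
  \matrix_(i < 2, j < 2) if (i : nat) == 0%N then (if (j : nat) == 0%N then a else x)
                        else (if (j : nat) == 0%N then 0 else b).

Lemma ut_mul a x b a' x' b' :
  ut a x b * ut a' x' b' = ut (a * a') (a * x' + x * b') (b * b').
Proof.
apply/matrixP=> i j; rewrite !mxE big_ord_recl big_ord1 !mxE /=.
by case: i => [[|[|//]] ?]; case: j => [[|[|//]] ?] /=; ring.
Qed.

Lemma ut_add a x b a' x' b' :
  ut a x b + ut a' x' b' = ut (a + a') (x + x') (b + b').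
Proof.
apply/matrixP=> i j; rewrite !mxE /=.
by case: i => [[|[|//]] ?]; case: j => [[|[|//]] ?] /=; ring.
Qed.

Lemma ut_scal k : (k%:M : 'M[K]_2) = ut k 0 k.
Proof.
apply/matrixP=> i j; rewrite !mxE /=.
by case: i => [[|[|//]] ?]; case: j => [[|[|//]] ?].
Qed.

Lemma ut_inj a x b a' x' b' : ut a x b = ut a' x' b' -> [/\ a = a', x = x' & b = b'].
Proof.
move=> E.
have := congr1 (fun M : 'M[K]_2 => M ord0 ord0) E.
have := congr1 (fun M : 'M[K]_2 => M ord0 ord_max) E.
have := congr1 (fun M : 'M[K]_2 => M ord_max ord_max) E.
by rewrite !mxE /=.
Qed.

Lemma ev_ut a1 x a2 b1 y b2 t : exists z,
  ev (fun k => (k%:M : 'M[K]_2)) (ut a1 x a2) (ut b1 y b2) t =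
  ut (ev (fun k : K => k) a1 b1 t) z (ev (fun k : K => k) a2 b2 t).
Proof.
elim: t => /=.
- by exists x.
- by exists y.
- by move=> k; exists 0; rewrite ut_scal.
- by move=> s [z1 ->] v [z2 ->]; eexists; rewrite ut_add.
- by move=> s [z1 ->] v [z2 ->]; eexists; rewrite ut_mul.
Qed.

End UT.

Section Main.
Variable K : fieldType.
Local Notation cK := (fun k : K => k).
Local Notation cP := (fun k : K => k%:P).
Local Notation cM := (fun k : K => (k%:M : 'M[K]_2)).

Lemma ev_horner (p q : {poly K}) x t : ev cK p.[x] q.[x] t = (ev cP p q t).[x].
Proof.
apply: (ev_nat (cR := cP) (f := fun r : {poly K} => r.[x])) => [u v|u v|k]; [exact: hornerD|exact: hornerM|exact: hornerC].
Qed.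

Lemma ev_comp (p q r : {poly K}) t : ev cP (p \Po r) (q \Po r) t = (ev cP p q t) \Po r.
Proof.
apply: (ev_nat (cR := cP) (f := fun u : {poly K} => u \Po r)) => [u v|u v|k]; [exact: comp_polyD|exact: comp_polyM|exact: comp_polyC].
Qed.

Lemma ev_halg (M : 'M[K]_2) (p q : {poly K}) t :
  ev cM (horner_alg M p) (horner_alg M q) t = horner_alg M (ev cP p q t).
Proof.
apply: (ev_nat (cR := cP) (f := horner_alg M)) => [u v|u v|k]; [exact: rmorphD|exact: rmorphM|].
by rewrite horner_algC scalemx1.
Qed.

Lemma model_axes a (P Q : {poly K}) : a != 1 -> model cP a P Q -> P = 0 \/ Q = 0.
Proof.
move=> a1 [m1 _]; rewrite polyC0 !mul0r !addr0 in m1.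
have : (1 - a)%:P * (P * P * Q) = 0.
  by rewrite polyCB mulrBl mul1r {1}m1; ring.
move/eqP; rewrite mulf_eq0 polyC_eq0 subr_eq0 eq_sym (negbTE a1) /=.
rewrite !mulf_eq0 orbb => /orP [] /eqP; by [left|right].
Qed.

Lemma mK0 a (y : K) : model cK a 0 y.
Proof. by split; rewrite !(mul0r, mulr0, addr0). Qed.
Lemma mK0' a (x : K) : model cK a x 0.
Proof. by split; rewrite !(mul0r, mulr0, addr0). Qed.
Lemma mX0 a : model cP a 'X 0.
Proof. by split; rewrite polyC0 !(mul0r, mulr0, addr0). Qed.
Lemma m0X a : model cP a 0 'X.
Proof. by split; rewrite polyC0 !(mul0r, mulr0, addr0). Qed.

Lemma iso_sym (a a' : K) : downup_isomorphic a 0 0 a' 0 0 -> downup_isomorphic a' 0 0 a 0 0.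
Proof. by case=> pd [pu [qd [qu [H1 H2 H3 H4]]]]; exists qd, qu, pd, pu. Qed.

Lemma no_one (a : K) : a != 1 -> downup_isomorphic a 0 0 1 0 0 -> False.
Proof.
move=> a1 [pd [pu [qd [qu [H1 H2 H3 H4]]]]].
set v1 := ev cK 0 1 qd; set v2 := ev cK 0 1 qu.
set w1 := ev cK 1 0 qd; set w2 := ev cK 1 0 qu.
have [hv1 hv2] := comp_back H3 (@okK K) (mK0 a 1).
have [hw1 hw2] := comp_back H3 (@okK K) (mK0' a 1).
set L1 := v1%:P + (w1 - v1)%:P * 'X; set L2 := v2%:P + (w2 - v2)%:P * 'X.
have mL : model cP 1 L1 L2.
  by split; rewrite polyC1 polyC0 !mul1r !mul0r !addr0; ring.
have [P0|Q0] := model_axes a1 (model_push H1 (@okP K) mL).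
- have := ev_horner L1 L2 1 pd; rewrite P0 horner0.
  have -> : L1.[1] = w1 by rewrite /L1 hornerD hornerM hornerX !hornerC mulr1; ring.
  have -> : L2.[1] = w2 by rewrite /L2 hornerD hornerM hornerX !hornerC mulr1; ring.
  by rewrite hw1 => /eqP; rewrite oner_eq0.
- have := ev_horner L1 L2 0 pu; rewrite Q0 horner0.
  have -> : L1.[0] = v1 by rewrite /L1 hornerD hornerM hornerX !hornerC mulr0 addr0.
  have -> : L2.[0] = v2 by rewrite /L2 hornerD hornerM hornerX !hornerC mulr0 addr0.
  by rewrite hv2 => /eqP; rewrite oner_eq0.
Qed.


Lemma ring_sub (A B G : K) : G = A - B -> A = B -> G = 0.
Proof. by move=> -> ->; rewrite subrr. Qed.

Lemma ring_add (A B G : K) : G = A + B -> A = 0 -> B = 0 -> G = 0.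
Proof. by move=> -> -> ->; rewrite addr0. Qed.

Lemma ut0 : ut 0 0 0 = 0 :> 'M[K]_2.
Proof. by apply/matrixP => i j; rewrite !mxE; case: ifP; case: ifP. Qed.

Lemma mU (a' x1 x2 : K) : x1 * x1 = a' * (x1 * x2) -> model cM a' (ut x1 0 x2) (ut 0 1 0).
Proof.
move=> h; split; rewrite !ut_scal !ut_mul !ut_add; congr ut; try ring.
by transitivity (x1 * x1); [ring | rewrite h; ring].
Qed.

Lemma diag_ev (x1 x2 : K) t : exists z,
  ev cM (ut x1 0 x2) (ut 0 1 0) t = ut (ev cP 'X 0 t).[x1] z (ev cP 'X 0 t).[x2].
Proof.
have [z ->] := ev_ut x1 0 x2 0 1 0 t; exists z.
by rewrite -!ev_horner !hornerX !horner0.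
Qed.

Lemma main_rel (a a' : K) : (2%:R : K) != 0 -> a != 1 -> a' != 1 ->
  downup_isomorphic a 0 0 a' 0 0 -> a' * (a' - a) = 0.
Proof.
move=> two a1 a'1 [pd [pu [qd [qu [H1 H2 H3 H4]]]]].
have mpq := model_push H1 (@okP K) (mX0 a').
have [b1 b2] := comp_back H4 (@okP K) (mX0 a').
have [P0|Q0] := model_axes a1 mpq.
- rewrite P0 in b1 b2.
  set q1 := ev cP 'X 0 pu in b1 b2 mpq.
  have e1 : (ev cP 0 'X qd) \Po q1 = 'X by rewrite -ev_comp comp_polyX comp_poly0.
  have sq1 : size q1 = 2.
    have := size_comp_poly (ev cP 0 'X qd) q1; rewrite e1 size_polyX /=.
    move=> /esym/eqP; rewrite muln_eq1 => /andP[_ /eqP].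
    by case: (size q1) => [|[|[|]]].
  have s20 : ev cP 0 'X qu = 0.
    apply/eqP; rewrite -size_poly_eq0 -(size_comp_poly2 _ sq1).
    by rewrite -ev_comp comp_polyX comp_poly0 b2 size_poly0.
  set c := q1`_1; set e := q1`_0.
  have c0 : c != 0.
    have : lead_coef q1 != 0 by rewrite lead_coef_eq0 -size_poly_eq0 sq1.
    by rewrite /lead_coef sq1.
  have hq : forall x, q1.[x] = c * x + e.
    move=> x; rewrite horner_coef sq1 !big_ord_recl big_ord0 /=.
    by rewrite /bump /= expr0 expr1 mulr1 addr0 addrC.
  have kl : forall x1 x2, x1 * x1 = a' * (x1 * x2) ->
      q1.[x2] * (q1.[x2] - a * q1.[x1]) = 0.
    move=> x1 x2 h; have mD := mU h.
    have [z hz] := diag_ev x1 x2 pd; have [y hy] := diag_ev x1 x2 pu.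
    rewrite P0 !horner0 in hz; rewrite -/q1 in hy.
    have [_ m2] := model_push H1 (@okM K) mD.
    rewrite hz hy !ut_scal !ut_mul !ut_add in m2; case/ut_inj: m2 => _ mid _.
    have z0 : z != 0.
      apply/eqP => z0; have [_ bU] := comp_back H4 (@okM K) mD.
      rewrite hz hy z0 ut0 in bU.
      have := ev_halg (ut q1.[x1] y q1.[x2]) 0 'X qu.
      rewrite horner_algX rmorph0 s20 rmorph0 bU -ut0 => /ut_inj [_ /eqP].
      by rewrite oner_eq0.
    have : z * (q1.[x2] * (q1.[x2] - a * q1.[x1])) = 0.
      by apply: (ring_sub _ mid); ring.
    by move/eqP; rewrite mulf_eq0 (negbTE z0) => /eqP.
  have k1 := kl 0 ((1 - e) / c) ltac:(by rewrite !mul0r mulr0).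
  have k2 := kl 0 ((-1 - e) / c) ltac:(by rewrite !mul0r mulr0).
  have hc : forall w, c * ((w - e) / c) + e = w.
    by move=> w; rewrite mulrC divfK // subrK.
  rewrite !hq mulr0 add0r !hc in k1 k2.
  have : (2%:R : K) = 0 by apply: (ring_add _ k1 k2); ring.
  by move/eqP; rewrite (negbTE two).
- rewrite Q0 in b1 b2.
  set p1 := ev cP 'X 0 pd in b1 b2 mpq.
  have e1 : (ev cP 'X 0 qd) \Po p1 = 'X by rewrite -ev_comp comp_polyX comp_poly0.
  have sp1 : size p1 = 2.
    have := size_comp_poly (ev cP 'X 0 qd) p1; rewrite e1 size_polyX /=.
    move=> /esym/eqP; rewrite muln_eq1 => /andP[_ /eqP].
    by case: (size p1) => [|[|[|]]].
  have s10 : ev cP 'X 0 qu = 0.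
    apply/eqP; rewrite -size_poly_eq0 -(size_comp_poly2 _ sp1).
    by rewrite -ev_comp comp_polyX comp_poly0 b2 size_poly0.
  set c := p1`_1; set e := p1`_0.
  have c0 : c != 0.
    have : lead_coef p1 != 0 by rewrite lead_coef_eq0 -size_poly_eq0 sp1.
    by rewrite /lead_coef sp1.
  have hp : forall x, p1.[x] = c * x + e.
    move=> x; rewrite horner_coef sp1 !big_ord_recl big_ord0 /=.
    by rewrite /bump /= expr0 expr1 mulr1 addr0 addrC.
  have kl : forall x1 x2, x1 * x1 = a' * (x1 * x2) ->
      p1.[x1] * (p1.[x1] - a * p1.[x2]) = 0.
    move=> x1 x2 h; have mD := mU h.
    have [z hz] := diag_ev x1 x2 pd; have [y hy] := diag_ev x1 x2 pu.
    rewrite Q0 !horner0 in hy.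
    have [m1 _] := model_push H1 (@okM K) mD.
    rewrite hz hy !ut_scal !ut_mul !ut_add in m1; case/ut_inj: m1 => _ mid _.
    have y0 : y != 0.
      apply/eqP => y0; have [_ bU] := comp_back H4 (@okM K) mD.
      rewrite hz hy y0 ut0 in bU.
      have := ev_halg (ut p1.[x1] z p1.[x2]) 'X 0 qu.
      rewrite horner_algX rmorph0 s10 rmorph0 bU -ut0 => /ut_inj [_ /eqP].
      by rewrite oner_eq0.
    rewrite -/p1 in mid.
    have : y * (p1.[x1] * (p1.[x1] - a * p1.[x2])) = 0.
      by apply: (ring_sub _ mid); ring.
    by move/eqP; rewrite mulf_eq0 (negbTE y0) => /eqP.
  have k0 := kl 0 1 ltac:(by rewrite !mul0r mulr0).
  have k00 := kl 0 0 ltac:(by rewrite !mul0r mulr0).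
  rewrite !hp !mulr0 !add0r mulr1 in k0 k00.
  have e0 : e = 0.
    case: (eqVneq e 0) => // ne; exfalso.
    move/eqP: k00; rewrite mulf_eq0 (negbTE ne) /= subr_eq0 => /eqP E0.
    move/eqP: k0; rewrite mulf_eq0 (negbTE ne) /= subr_eq0 => /eqP E1.
    have : a * c = 0.
      by apply: (ring_sub (A := a * (c + e)) (B := a * e)); [ring | rewrite -E1 -E0].
    move/eqP; rewrite mulf_eq0 (negbTE c0) orbF => /eqP a0.
    by move: ne; rewrite E0 a0 mul0r eqxx.
  have kf := kl a' 1 ltac:(by rewrite mulr1).
  rewrite !hp e0 !addr0 mulr1 in kf.
  have : (c * c) * (a' * (a' - a)) = 0.
    by apply: (ring_sub (A := c * a' * (c * a' - a * c)) (B := 0)); [ring | exact: kf].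
  by move/eqP; rewrite mulf_eq0 mulf_eq0 (negbTE c0) /= => /eqP.
Qed.

End Main.

Lemma subst_id (K : Type) (t : term K) : subst Gd Gu t = t.
Proof. by elim: t => //= s -> v ->. Qed.

Theorem proposition1 (K : closedFieldType) (hK : [pchar K] =i pred0)
    (alpha alpha' : K) :
  downup_isomorphic alpha 0 0 alpha' 0 0 <-> alpha = alpha'.
Proof.
split; last first.
  move=> <-; exists Gd, Gu, Gd, Gu; split=> *; rewrite ?subst_id //; exact: dq_refl.
move=> iso.
have two : (2%:R : K) != 0.
  apply/negP => /eqP h2; have := hK 2%N; by rewrite !inE h2 eqxx.
case: (eqVneq alpha 1) => [a1|a1]; case: (eqVneq alpha' 1) => [a'1|a'1].
- by rewrite a1 a'1.
- by exfalso; apply: (no_one a'1); rewrite -a1; apply: iso_sym.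
- by exfalso; apply: (no_one a1); rewrite -a'1.
have h1 := main_rel two a1 a'1 iso.
have h2 := main_rel two a'1 a1 (iso_sym iso).
case: (eqVneq alpha alpha') => // ne; exfalso.
move/eqP: h1; rewrite mulf_eq0 subr_eq0 => /orP [/eqP z1|/eqP e]; last first.
  by move: ne; rewrite e eqxx.
move/eqP: h2; rewrite mulf_eq0 subr_eq0 => /orP [/eqP z2|/eqP e]; last first.
  by move: ne; rewrite e eqxx.
by move: ne; rewrite z1 z2 eqxx.
Qed.
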